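(* Let $R$ be a commutative ring of Krull dimension $0$ which is integral over an Artinian subring $R_0$, and write $\mathcal{F}=\mathcal{F}(R_0,R)=\{R_\alpha\}$. Then for every $\alpha$, the ring $\mathcal{F}\llbracket X_1,\ldots,X_n\rrbracket$ is integral over its subring $R_\alpha\llbracket X_1,\ldots,X_n\rrbracket$.
   Context: All rings are commutative with identity, and subrings share the identity. For a $0$-dimensional ring $R$ and an Artinian subring $R_0\subseteq R$ such that $R$ is integral over $R_0$, let $\mathcal{F}(R_0,R)=\{R_\alpha\}$ denote the family of all subrings of $R$ that are finitely generated as $R_0$-algebras; this family is directed, each $R_\alpha$ is Artinian, and $R=\bigcup_\alpha R_\alpha$. The ring of Artinian power series $\mathcal{F}\llbracket X_1,\ldots,X_n\rrbracket$ is the set of all $f\in R\llbracket X_1,\ldots,X_n\rrbracket$ such that all coefficients of $f$ lie in a single $R_\alpha\in\mathcal{F}$; equivalently, $\mathcal{F}\llbracket X_1,\ldots,X_n\rrbracket=\bigcup_\alpha R_\alpha\llbracket X_1,\ldots,X_n\rrbracket$, which is a subring of $R\llbracket X_1,\ldots,X_n\rrbracket$. *)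

(* Defs.v *)
From HB Require Import structures.
From mathcomp Require Import all_boot all_order all_algebra.
Set Implicit Arguments. Unset Strict Implicit. Unset Printing Implicit Defensive.
Import Order.TTheory GRing.Theory Num.Theory.
Local Open Scope ring_scope.

Section RingNotions.
Variable R : comNzRingType.

Definition is_subring (S : R -> Prop) : Prop :=
  S 1 /\ (forall x y, S x -> S y -> S (x - y)) /\ (forall x y, S x -> S y -> S (x * y)).

Definition ideal_of (S : R -> Prop) (I : R -> Prop) : Prop :=
  (forall x, I x -> S x) /\ I 0 /\ (forall x y, I x -> I y -> I (x + y)) /\
  (forall r x, S r -> I x -> I (r * x)).

Definition artinian (S : R -> Prop) : Prop :=
  forall I : nat -> R -> Prop,
    (forall k, ideal_of S (I k)) ->
    (forall k x, I k.+1 x -> I k x) ->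
    exists N, forall k, (N <= k)%N -> forall x, I k x <-> I N x.

Definition prime_ideal (P : R -> Prop) : Prop :=
  ideal_of (fun _ => True) P /\ ~ P 1 /\ (forall x y, P (x * y) -> P x \/ P y).

Definition krull_dim0 : Prop :=
  (exists P, prime_ideal P) /\
  (forall P Q, prime_ideal P -> prime_ideal Q ->
     (forall x, P x -> Q x) -> forall x, Q x -> P x).

Definition integral_over (S A : R -> Prop) : Prop :=
  forall x, A x -> exists p : {poly R},
    p \is monic /\ (forall i, S p`_i) /\ root p x.

Definition gen_alg (R0 : R -> Prop) (s : seq R) (x : R) : Prop :=
  forall T, is_subring T -> (forall y, R0 y -> T y) ->
    (forall y, y \in s -> T y) -> T x.

(* Membership in the family F(R0,R): subrings of R that are finitely
   generated R0-algebras. *)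
Definition in_family (R0 : R -> Prop) (A : R -> Prop) : Prop :=
  exists s : seq R, forall x, A x <-> gen_alg R0 s x.

(* Formal power series in n variables X_1..X_n over R:
   functions from multi-indices ('I_n -> nat) to R. *)
Definition multi_index (n : nat) := {ffun 'I_n -> nat}.
Definition series (n : nat) := multi_index n -> R.

Definition sone (n : nat) : series n :=
  fun m => if m == [ffun _ => 0%N] then 1 else 0.

(* Cauchy product: (f g)_m = sum_{a <= m} f_a g_{m-a}; multi-indices a <= m
   are enumerated as functions 'I_n -> 'I_(max_i m_i + 1) bounded by m. *)
Definition smul (n : nat) (f g : series n) : series n :=
  fun m => \sum_(a : {ffun 'I_n -> 'I_(\max_(i < n) m i).+1}
                 | [forall i, (a i <= m i)%N])
             f [ffun i => nat_of_ord (a i)] * g [ffun i => (m i - a i)%N].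

Definition sexp (n : nat) (f : series n) (k : nat) : series n :=
  iter k (smul f) (@sone n).

Definition ps_over (n : nat) (A : R -> Prop) (f : series n) : Prop :=
  forall m, A (f m).

Definition artinian_ps (R0 : R -> Prop) (n : nat) (f : series n) : Prop :=
  exists A, in_family R0 A /\ ps_over A f.

Definition ps_integral_over (n : nat) (Q P : series n -> Prop) : Prop :=
  forall f, P f -> exists (d : nat) (c : nat -> series n),
    (forall i, (i < d)%N -> Q (c i)) /\
    (forall m, sexp f d m + \sum_(i < d) smul (c i) (sexp f i) m = 0).

End RingNotions.

(* Main.v *)
Require Import Defs.
From HB Require Import structures.
From mathcomp Require Import all_boot all_order all_algebra.
From mathcomp Require Import zify.
From mathcomp Require boolp.
Set Implicit Arguments. Unset Strict Implicit. Unset Printing Implicit Defensive.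
Import Order.TTheory GRing.Theory Num.Theory.
Local Open Scope ring_scope.

Ltac flia := repeat match goal with |- context [@fun_of_fin _ _ _ ?f ?i] =>
  let a := fresh "a" in set a := @fun_of_fin _ _ _ f i end; lia.

Section Ser.
Variables (R : comNzRingType) (n : nat).
Notation MI := (multi_index n).

Definition leqm (a m : MI) := [forall i, (a i <= m i)%N].
Definition subm (m a : MI) : MI := [ffun i => (m i - a i)%N].
Definition addm (m a : MI) : MI := [ffun i => (m i + a i)%N].
Definition zm : MI := [ffun _ => 0%N].
Definition tonat K (a : {ffun 'I_n -> 'I_K}) : MI := [ffun i => nat_of_ord (a i)].
Definition bnd (m : MI) := (\max_(i < n) m i).+1.
Definition box K := map (@tonat K) (index_enum {ffun 'I_n -> 'I_K}).
Definition L (m : MI) := filter (leqm ^~ m) (box (bnd m)).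


Lemma leqmP (a m : MI) : reflect (forall i, a i <= m i)%N (leqm a m).
Proof. exact: forallP. Qed.

Lemma uniq_box K : uniq (box K).
Proof.
rewrite map_inj_uniq ?index_enum_uniq // => a b /ffunP H.
apply/ffunP => i; apply/val_inj; have := H i; rewrite !ffunE; done.
Qed.

Lemma uniqL m : uniq (L m).
Proof. by rewrite filter_uniq ?uniq_box. Qed.

Lemma memL (m x : MI) : (x \in L m) = leqm x m.
Proof.
rewrite mem_filter; case E: (leqm x m) => //=.
have Hb : forall i, (x i < bnd m)%N.
  move=> i; move/leqmP: E => /(_ i) H; apply: (leq_ltn_trans H).
  by rewrite ltnS (@leq_bigmax _ (fun j : 'I_n => m j) i).
apply/mapP; exists [ffun i => Ordinal (Hb i)]; first by rewrite mem_index_enum.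
by apply/ffunP => i; rewrite !ffunE.
Qed.

Lemma smulE (f g : series R n) m :
  smul f g m = \sum_(x <- L m) f x * g (subm m x).
Proof.
rewrite /smul /L /bnd big_filter /box big_map /=.
rewrite /index_enum /=. apply: eq_big => [a|a _].
  by apply: eq_forallb => i; rewrite ffunE.
congr (_ * _); congr g; apply/ffunP => i; rewrite !ffunE //.
Qed.

Lemma perm_L (m : MI) (s : seq MI) : uniq s -> (forall x, (x \in s) = leqm x m) ->
  perm_eq s (L m).
Proof. by move=> us Hs; apply: uniq_perm => // [|x]; rewrite ?uniqL // memL Hs. Qed.

Lemma subKm (m x : MI) : leqm x m -> subm m (subm m x) = x.
Proof. move/leqmP=> H; apply/ffunP => i; rewrite !ffunE; have := H i. flia. Qed.

Lemma leqm_sub (m x : MI) : leqm (subm m x) m.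
Proof. by apply/leqmP => i; rewrite ffunE leq_subr. Qed.

Lemma smulC (f g : series R n) m : smul f g m = smul g f m.
Proof.
rewrite !smulE.
have P : perm_eq (map (subm m) (L m)) (L m).
  apply: perm_L.
    rewrite map_inj_in_uniq ?uniqL // => x y; rewrite !memL => Hx Hy E.
    by rewrite -(subKm Hx) E subKm.
  move=> x; apply/mapP/idP => [[y _ ->]|H]; first exact: leqm_sub.
  by exists (subm m x); rewrite ?memL ?leqm_sub // subKm.
rewrite -(perm_big _ P) big_map; apply: eq_big_seq => x; rewrite memL => H.
by rewrite subKm // mulrC.
Qed.

Lemma smul1 (g : series R n) m : smul (@sone R n) g m = g m.
Proof.
have z0 : zm \in L m by rewrite memL; apply/leqmP => i; rewrite ffunE.
rewrite smulE (bigD1_seq zm) ?uniqL //= big1_seq.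
  rewrite /sone eqxx mul1r addr0; congr g; apply/ffunP => i; rewrite !ffunE; flia.
by move=> x /andP[H _]; rewrite /sone /zm (negbTE H) mul0r.
Qed.

Lemma exch (m : MI) (F : MI -> MI -> R) :
  \sum_(x <- L m) \sum_(y <- L x) F x y =
  \sum_(y <- L m) \sum_(z <- L (subm m y)) F (addm y z) y.
Proof.
transitivity (\sum_(x <- L m) \sum_(y <- L m | leqm y x) F x y).
  apply: eq_big_seq => x; rewrite memL => Hx; rewrite -big_filter.
  have P : perm_eq [seq y <- L m | leqm y x] (L x).
    apply: perm_L; first by rewrite filter_uniq ?uniqL.
    move=> y; rewrite mem_filter memL; apply/andP/idP => [[]//|H]; split=> //.
    apply/leqmP => i; move/leqmP: Hx => /(_ i); move/leqmP: H => /(_ i); flia.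
  by rewrite filter_predT -(perm_big _ P) big_filter.
rewrite (exchange_big_dep xpredT) //=; apply: eq_big_seq => y; rewrite memL => Hy.
rewrite -big_filter.
have P : perm_eq (map (addm y) (L (subm m y))) [seq x <- L m | leqm y x].
  apply: uniq_perm; last 2 first.
  - by rewrite filter_uniq ?uniqL.
  - move=> x; rewrite mem_filter memL; apply/mapP/andP => [[z]|[H1 H2]].
      rewrite memL => /leqmP Hz ->; split; apply/leqmP => i; rewrite ffunE.
        flia.
      by move/leqmP: Hy => /(_ i); have := Hz i; rewrite ffunE; flia.
    exists (subm x y); first by rewrite memL; apply/leqmP => i; rewrite !ffunE;
      move/leqmP: H2 => /(_ i); flia.
    apply/ffunP => i; rewrite !ffunE; move/leqmP: H1 => /(_ i); flia.
  rewrite map_inj_uniq ?uniqL // => a b /ffunP E; apply/ffunP => i.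
  by have := E i; rewrite !ffunE; flia.
by rewrite -(perm_big _ P) big_map.
Qed.

Lemma smulA (f g h : series R n) m :
  smul (fun k => smul f g k) h m = smul f (fun k => smul g h k) m.
Proof.
rewrite !smulE.
under eq_bigr do rewrite smulE mulr_suml.
under [RHS]eq_bigr do rewrite smulE mulr_sumr.
rewrite exch; apply: eq_bigr => y _; apply: eq_bigr => z _.
rewrite mulrA; congr (_ * _ * _); first congr g.
  by apply/ffunP => i; rewrite !ffunE; flia.
by congr h; apply/ffunP => i; rewrite !ffunE; flia.
Qed.

Lemma smulDl (f1 f2 g : series R n) m :
  smul (fun k => f1 k + f2 k) g m = smul f1 g m + smul f2 g m.
Proof. by rewrite !smulE -big_split; apply: eq_bigr => x _; rewrite mulrDl. Qed.
End Ser.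

Definition ser (R : comNzRingType) n := series R n.
Section SerRing.
Variables (R : comNzRingType) (n : nat).
HB.instance Definition _ := boolp.gen_eqMixin (ser R n).
HB.instance Definition _ := boolp.gen_choiceMixin (ser R n).

Definition szero : ser R n := fun _ => 0.
Definition sopp (f : ser R n) : ser R n := fun m => - f m.
Definition sadd (f g : ser R n) : ser R n := fun m => f m + g m.

Lemma saddA : associative sadd.
Proof. by move=> f g h; apply: boolp.funext => m; rewrite /sadd addrA. Qed.
Lemma saddC : commutative sadd.
Proof. by move=> f g; apply: boolp.funext => m; rewrite /sadd addrC. Qed.
Lemma sadd0 : left_id szero sadd.
Proof. by move=> f; apply: boolp.funext => m; rewrite /sadd add0r. Qed.
Lemma saddN : left_inverse szero sopp sadd.
Proof. by move=> f; apply: boolp.funext => m; rewrite /sadd /sopp addNr. Qed.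

HB.instance Definition _ := GRing.isZmodule.Build (ser R n) saddA saddC sadd0 saddN.

Definition smul' (f g : ser R n) : ser R n := smul f g.
Lemma smul'A : associative smul'.
Proof. by move=> f g h; apply: boolp.funext => m; rewrite /smul' smulA. Qed.
Lemma smul'C : commutative smul'.
Proof. by move=> f g; apply: boolp.funext => m; rewrite /smul' smulC. Qed.
Lemma smul'1 : left_id (@sone R n : ser R n) smul'.
Proof. by move=> f; apply: boolp.funext => m; rewrite /smul' smul1. Qed.
Lemma smul'D : left_distributive smul' (@GRing.add (ser R n)).
Proof. by move=> f g h; apply: boolp.funext => m; rewrite /smul' smulDl. Qed.
Lemma sone_neq0 : (@sone R n : ser R n) != 0.
Proof.
apply/eqP => /(congr1 (fun f : ser R n => f [ffun _ => 0%N])).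
by rewrite /sone eqxx; apply/eqP; rewrite oner_neq0.
Qed.

HB.instance Definition _ := GRing.Zmodule_isComNzRing.Build (ser R n) smul'A smul'C smul'1 smul'D sone_neq0.

Lemma serE_add (f g : ser R n) m : (f + g) m = f m + g m. Proof. by []. Qed.
Lemma serE_mul (f g : ser R n) m : (f * g) m = smul f g m. Proof. by []. Qed.
Lemma serE_1 m : (1 : ser R n) m = @sone R n m. Proof. by []. Qed.
Lemma serE_B (f g : ser R n) m : (f - g) m = f m - g m. Proof. by []. Qed.
Lemma serE_0 m : (0 : ser R n) m = 0. Proof. by []. Qed.
End SerRing.
Section Span.
Variables (R : comNzRingType) (R0 : R -> Prop) (HR0 : is_subring R0).

Lemma R0_1 : R0 1. Proof. by case: HR0. Qed.
Lemma R0_B x y : R0 x -> R0 y -> R0 (x - y). Proof. by case: HR0 => _ [H _]; apply: H. Qed.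
Lemma R0_M x y : R0 x -> R0 y -> R0 (x * y). Proof. by case: HR0 => _ [_ H]; apply: H. Qed.
Lemma R0_0 : R0 0. Proof. by rewrite -(subrr 1); apply: R0_B; apply: R0_1. Qed.
Lemma R0_N x : R0 x -> R0 (- x). Proof. by move=> H; rewrite -sub0r; apply: R0_B => //; apply: R0_0. Qed.
Lemma R0_D x y : R0 x -> R0 y -> R0 (x + y).
Proof. by move=> Hx Hy; rewrite -[y]opprK; apply: R0_B => //; apply: R0_N. Qed.
Lemma R0_sum I (r : seq I) (P : pred I) F : (forall i, P i -> R0 (F i)) ->
  R0 (\sum_(i <- r | P i) F i).
Proof. by move=> H; apply: big_ind => //; [apply: R0_0 | apply: R0_D]. Qed.

Definition span (b : seq R) (y : R) :=
  exists r : nat -> R, (forall i, R0 (r i)) /\ y = \sum_(i < size b) r i * b`_i.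

Lemma span0 b : span b 0.
Proof. by exists (fun _ => 0); split=> [_|]; [apply: R0_0 | rewrite big1 // => i _; rewrite mul0r]. Qed.

Lemma spanD b y z : span b y -> span b z -> span b (y + z).
Proof.
move=> [r [Hr ->]] [q [Hq ->]]; exists (fun i => r i + q i); split=> [i|].
  by apply: R0_D.
by rewrite -big_split; apply: eq_bigr => i _; rewrite mulrDl.
Qed.

Lemma spanZ b c y : R0 c -> span b y -> span b (c * y).
Proof.
move=> Hc [r [Hr ->]]; exists (fun i => c * r i); split=> [i|]; first by apply: R0_M.
by rewrite mulr_sumr; apply: eq_bigr => i _; rewrite mulrA.
Qed.

Lemma spanB b y z : span b y -> span b z -> span b (y - z).
Proof.
move=> Hy Hz; apply: spanD => //; rewrite -mulN1r; apply: spanZ => //.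
by apply: R0_N; apply: R0_1.
Qed.

Lemma span_sum b I (r : seq I) (P : pred I) F : (forall i, P i -> span b (F i)) ->
  span b (\sum_(i <- r | P i) F i).
Proof. by move=> H; apply: big_ind => //; [apply: span0 | apply: spanD]. Qed.

Lemma span_nth b i : (i < size b)%N -> span b b`_i.
Proof.
move=> Hi; exists (fun j => if j == i then 1 else 0); split=> [j|].
  by case: ifP => _; [apply: R0_1 | apply: R0_0].
rewrite (bigD1 (Ordinal Hi)) //= eqxx mul1r big1 ?addr0 // => j Hj.
by rewrite ifF ?mul0r //; apply: negbTE; apply: contra Hj => /eqP E; apply/eqP/val_inj.
Qed.

Lemma span_mem b u : u \in b -> span b u.
Proof. by move=> H; rewrite -(nth_index 0 H); apply: span_nth; rewrite index_mem. Qed.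

Lemma span_mulP b : (forall u v, u \in b -> v \in b -> span b (u * v)) ->
  forall y z, span b y -> span b z -> span b (y * z).
Proof.
move=> H y z [r [Hr ->]] [q [Hq ->]]; rewrite mulr_suml.
apply: span_sum => i _; rewrite mulr_sumr; apply: span_sum => j _.
rewrite mulrACA; apply: spanZ; first by apply: R0_M.
by apply: H; apply: mem_nth.
Qed.

Lemma span_sub b b' y : (forall u, u \in b -> span b' u) -> span b y -> span b' y.
Proof.
move=> H [r [Hr ->]]; apply: span_sum => i _; apply: spanZ => //.
by apply: H; apply: mem_nth.
Qed.

Section Pow.
Variables (x : R) (p : {poly R}).
Hypotheses (mp : p \is monic) (Rp : forall i, R0 p`_i) (rp : root p x).
Let d := (size p).-1.
Let b0 := mkseq (fun l => x ^+ l) d.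

Lemma size_p_gt1 : (1 < size p)%N.
Proof.
rewrite ltnNge; apply/negP => H; move/size1_polyC: (H) => E.
have : lead_coef p = p`_0 by rewrite {1}E lead_coefC.
rewrite (monicP mp) => E1; move: rp; rewrite E -E1 /root hornerC; apply/negP.
by rewrite oner_neq0.
Qed.

Lemma pow_span k : span b0 (x ^+ k).
Proof.
have Hd : (0 < d)%N by rewrite /d -ltnS prednK ?size_p_gt1 // ltnW // size_p_gt1.
have Hxd : span b0 (x ^+ d).
  move/eqP: rp; rewrite horner_coef.
  have -> : size p = d.+1 by rewrite /d prednK // ltnW // size_p_gt1.
  rewrite big_ord_recr /= -/(lead_coef p) (monicP mp) mul1r => /eqP.
  rewrite addrC addr_eq0 => /eqP ->.
  exists (fun i => - p`_i); split=> [i|]; first by apply: R0_N.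
  rewrite size_mkseq -sumrN; apply: eq_bigr => i _; rewrite nth_mkseq // mulNr //.
have Hl : forall l, (l < d)%N -> span b0 (x ^+ l.+1).
  move=> l Hl; case: (ltnP l.+1 d) => H.
    by rewrite -(nth_mkseq 0 (fun l => x ^+ l) H); apply: span_nth; rewrite size_mkseq.
  by have -> : l.+1 = d by apply/eqP; rewrite eqn_leq H Hl.
elim: k => [|k [r [Hr Hk]]].
  by rewrite -(nth_mkseq 0 (fun l => x ^+ l) Hd); apply: span_nth; rewrite size_mkseq.
rewrite exprS Hk mulr_sumr; apply: span_sum => i _; rewrite mulrCA; apply: spanZ => //.
rewrite nth_mkseq -?exprS; last by rewrite -(size_mkseq (fun l => x ^+ l) d).
by apply: Hl; rewrite -(size_mkseq (fun l => x ^+ l) d).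
Qed.

Lemma size_b0 : size b0 = d. Proof. exact: size_mkseq. Qed.
End Pow.

Definition good (b : seq R) :=
  span b 1 /\ (forall u v, u \in b -> v \in b -> span b (u * v)).

Lemma gen_span (s : seq R) : (forall x, x \in s -> exists p : {poly R},
    p \is monic /\ (forall i, R0 p`_i) /\ root p x) ->
  exists b, good b /\ (forall y, y \in s -> span b y).
Proof.
elim: s => [_|x s IH Hs].
  exists [:: 1]; split=> //; split; first by apply: span_mem; rewrite inE.
  by move=> u v; rewrite !inE => /eqP -> /eqP ->; rewrite mulr1; apply: span_mem; rewrite inE.
have [b' [[b'1 b'M] b's]] := IH (fun y Hy => Hs y (mem_behead (s:=x :: s) Hy)).
have [p [mp [Rp rp]]] := Hs x (mem_head _ _).
pose d := (size p).-1.
pose b := [seq c * x ^+ l | c <- b', l <- iota 0 d].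
have G : forall c k, span b' c -> span b (c * x ^+ k).
  move=> c k [r [Hr ->]]; have [q [Hq ->]] := pow_span mp Rp rp k.
  rewrite mulr_suml; apply: span_sum => i _; rewrite mulr_sumr; apply: span_sum => j _.
  rewrite mulrACA; apply: spanZ; first by apply: R0_M.
  have Hj : (j < d)%N by rewrite -(size_mkseq (fun l => x ^+ l) d); exact: ltn_ord.
  rewrite nth_mkseq //; apply: span_mem.
  apply: (allpairs_f (fun c l => c * x ^+ l)); first by apply: mem_nth.
  by rewrite mem_iota.
exists b; split; first split.
- by rewrite -[1]mulr1 -(expr0 x); apply: G.
- move=> u v /allpairsP [[c l] [/= Hc Hl ->]] /allpairsP [[c' l'] [/= Hc' Hl' ->]].
  rewrite mulrACA -exprD; apply: G; apply: span_mulP => //; exact: span_mem.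
- move=> y; rewrite inE => /orP [/eqP ->|Hy].
    have -> : x = 1 * x ^+ 1 by rewrite mul1r expr1.
    by apply: G.
  by rewrite -[y]mulr1 -(expr0 x); apply: G; apply: b's.
Qed.

Lemma gen_alg_span (s : seq R) b : good b -> (forall y, y \in s -> span b y) ->
  forall y, gen_alg R0 s y -> span b y.
Proof.
move=> [b1 bM] Hs y; apply.
- split=> //; split; [apply: spanB | apply: (span_mulP bM)].
- move=> z Hz; have -> : z = z * 1 by rewrite mulr1.
  exact: spanZ Hz b1.
- exact: Hs.
Qed.
End Span.

Section Const.
Variables (R : comNzRingType) (n : nat).
Definition sc (c : R) : ser R n := fun m => if m == zm n then c else 0.

Lemma smul_scl c (g : series R n) m : smul (sc c) g m = c * g m.
Proof.
have z0 : zm n \in L m by rewrite memL; apply/leqmP => i; rewrite ffunE.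
rewrite smulE (bigD1_seq (zm n)) ?uniqL //= big1_seq.
  rewrite /sc eqxx addr0; congr (_ * g _); apply/ffunP => i; rewrite !ffunE; flia.
by move=> x /andP[H _]; rewrite /sc (negbTE H) mul0r.
Qed.

Lemma smul_scr c (g : series R n) m : smul g (sc c) m = g m * c.
Proof. by rewrite smulC smul_scl mulrC. Qed.

Lemma sc_zmod : zmod_morphism sc.
Proof. by move=> a b; apply: boolp.funext => m; rewrite serE_B /sc; case: ifP => _; rewrite ?subr0. Qed.

Lemma sc_monoid : monoid_morphism sc.
Proof.
split; first by [].
by move=> a b; apply: boolp.funext => m; rewrite serE_mul smul_scl /sc; case: ifP; rewrite ?mulr0.
Qed.

HB.instance Definition _ := GRing.isZmodMorphism.Build R (ser R n) sc sc_zmod.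
HB.instance Definition _ := GRing.isMonoidMorphism.Build R (ser R n) sc sc_monoid.

Lemma sum_ev I (r : seq I) (P : pred I) (F : I -> ser R n) m :
  (\sum_(i <- r | P i) F i) m = \sum_(i <- r | P i) F i m.
Proof. by apply: (big_morph (fun f : ser R n => f m)). Qed.

Lemma sexpE (f : ser R n) k : sexp f k = f ^+ k.
Proof. by elim: k => // k IH; rewrite exprS -IH. Qed.
End Const.

Section Sub.
Variables (R : comNzRingType) (n : nat) (R0 : R -> Prop) (HR0 : is_subring R0).
Definition psR0 : {pred ser R n} := let _ := HR0 in fun g => boolp.asbool (forall m, R0 (g m)).

Lemma psR0P (g : ser R n) : reflect (forall m, R0 (g m)) (g \in psR0).
Proof. exact: boolp.asboolP. Qed.

Lemma psR0_closed : subring_closed psR0.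
Proof.
split.
- apply/psR0P => m; rewrite serE_1 /sone; case: ifP => _; [exact: R0_1 | exact: R0_0].
- move=> u v /psR0P Hu /psR0P Hv; apply/psR0P => m; rewrite serE_B; exact: R0_B.
- move=> u v /psR0P Hu /psR0P Hv; apply/psR0P => m; rewrite serE_mul smulE.
  by apply: R0_sum => // x _; apply: R0_M.
Qed.

HB.instance Definition _ := GRing.isSubringClosed.Build (ser R n) psR0 psR0_closed.
Record subS := SubS { sval : ser R n; _ : sval \in psR0 }.
HB.instance Definition _ := [isSub for sval].
HB.instance Definition _ := [Choice of subS by <:].
HB.instance Definition _ := [SubChoice_isSubComNzRing of subS by <:].

Lemma int_val (g : ser R n) : g \in psR0 -> integralOver (val : subS -> ser R n) g.
Proof. by move=> H; rewrite -[g]/(val (SubS H)); apply: integral_id. Qed.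

Lemma int_sc c (q : {poly R}) : q \is monic -> (forall i, R0 q`_i) -> root q c ->
  integralOver (val : subS -> ser R n) (@sc R n c).
Proof.
move=> mq Rq rq.
pose phi a : subS := insubd 0 (@sc R n a).
have phiE a : R0 a -> val (phi a) = @sc R n a.
  move=> Ha; rewrite /phi insubdK //; apply/psR0P => m; rewrite /sc.
  by case: ifP => _ //; exact: R0_0.
have phi0 : phi 0 = 0.
  apply: val_inj; rewrite phiE; last exact: R0_0.
  by apply: boolp.funext => m; rewrite /sc; case: ifP.
have phi1 : phi 1 = 1 by apply: val_inj; rewrite phiE //; exact: R0_1.
exists (map_poly phi q).
  by rewrite monicE lead_coef_map_id0 //; rewrite (monicP mq) phi1 ?oner_neq0.
have -> : map_poly val (map_poly phi q) = map_poly (@sc R n) q.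
  by apply/polyP => i; rewrite coef_map /= coef_map_id0 // phiE // coef_map.
exact: rmorph_root.
Qed.
End Sub.

Unset Implicit Arguments.
Set Strict Implicit.
Theorem proposition6p4 (R : comNzRingType) (R0 : R -> Prop) (n : nat) :
  krull_dim0 R ->
  is_subring R0 -> artinian R0 ->
  integral_over R0 (fun _ => True) ->
  forall Ralpha : R -> Prop, in_family R0 Ralpha ->
    @ps_integral_over R n (@ps_over R n Ralpha) (@artinian_ps R R0 n).
Proof.
move=> _ HR0 _ Hint Ra [t HRa] f [A [[s HA] Hf]].
have R0Ra : forall y, R0 y -> Ra y.
  by move=> y Hy; apply/HRa => T _ HT _; exact: HT y Hy.
have [b [gb sb]] := gen_span HR0 (s:=s) (fun x _ => Hint x I).
have Hsp : forall m, span R0 b (f m).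
  by move=> m; apply: (gen_alg_span HR0 gb sb); apply/HA.
have [r Hr] := boolp.choice Hsp.
pose g i : ser R n := fun m => r m i.
have gE : (f : ser R n) = \sum_(i < size b) g i * @sc R n b`_i.
  apply: boolp.funext => m; rewrite sum_ev; have [_ ->] := Hr m.
  by apply: eq_bigr => i _; rewrite serE_mul smul_scr.
have Hint_f : integralOver (val : @subS R n R0 HR0 -> ser R n) f.
  rewrite gE; apply: big_ind => [|x y|i _]; [exact: integral0 | exact: integral_add | ].
  apply: integral_mul.
    by apply: int_val; apply/psR0P => m; exact: (proj1 (Hr m) i).
  have [q [mq [Rq rq]]] := Hint b`_i I; exact: int_sc mq Rq rq.
have [p mp rp] := Hint_f.
pose P := map_poly (val : @subS R n R0 HR0 -> ser R n) p.
have mP : P \is monic by apply: monic_map.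
have PR : forall i m, R0 (P`_i m).
  by move=> i m; rewrite coef_map; move: (valP p`_i) => /psR0P; apply.
pose d := (size P).-1.
exists d, (fun i => P`_i); split.
  by move=> i _ m; apply: R0Ra; exact: PR.
move=> m.
have HS : size P = d.+1 by rewrite /d prednK // size_poly_gt0 monic_neq0.
have Pd : P`_d = 1 by move/monicP: mP.
move: rp; rewrite -/P /root horner_coef HS big_ord_recr /= Pd mul1r => /eqP E.
transitivity (((f : ser R n) ^+ d + \sum_(i < d) P`_i * (f : ser R n) ^+ i) m).
  rewrite serE_add sum_ev sexpE; congr (_ + _).
  by apply: eq_bigr => i _; rewrite serE_mul sexpE.
by rewrite addrC E.
Qed.
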